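(* Let $A,B\in M_n(\mathbb{R}_+)$ be nilpotent such that both $A$ and $B$ annihilate $AB$ and $BA$, i.e. $A(AB)=A(BA)=B(AB)=B(BA)=0$. Then $A$ and $B$ are simultaneously triangularizable.
   Context: Max algebra: $\mathbb{R}_+$ the nonnegative reals with $a\oplus b=\max\{a,b\}$ and ordinary multiplication; for $A,B\in M_n(\mathbb{R}_+)$, $(AB)_{ij}=\max_k a_{ik}b_{kj}$. A matrix is nilpotent if some power (max-product) is $0$. $GL_n(\mathbb{R}_+)$ is the set of matrices invertible under this product (the generalized permutation matrices). $A,B$ are simultaneously triangularizable if there is one $P\in GL_n(\mathbb{R}_+)$ with both $P^{-1}AP$ and $P^{-1}BP$ upper triangular. *)

(* Defs.v *)
From HB Require Import structures.
From mathcomp Require Import all_boot all_order all_algebra.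
From mathcomp Require Import reals.
Set Implicit Arguments. Unset Strict Implicit. Unset Printing Implicit Defensive.
Import Order.TTheory GRing.Theory Num.Theory.
Local Open Scope ring_scope.

Section MaxAlgebra.
Variable R : realType.

Definition nonneg_mx n (A : 'M[R]_n) : Prop := forall i j, 0 <= A i j.

(* Max-product: (AB)_{ij} = max_k a_{ik} b_{kj}; for nonnegative entries the
   empty max is 0, the zero of the max algebra. *)
Definition maxmul n (A B : 'M[R]_n) : 'M[R]_n :=
  \matrix_(i, j) \big[Num.max/0]_(k < n) (A i k * B k j).

Definition maxid n : 'M[R]_n := \matrix_(i, j) (if i == j then 1 else 0).

Fixpoint maxpow n (A : 'M[R]_n) (k : nat) : 'M[R]_n :=
  match k with
  | O => maxid n
  | S k' => maxmul A (maxpow A k')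
  end.

Definition max_nilpotent n (A : 'M[R]_n) : Prop :=
  exists k : nat, maxpow A k = 0.

Definition max_inverse n (P Q : 'M[R]_n) : Prop :=
  nonneg_mx P /\ nonneg_mx Q /\ maxmul P Q = maxid n /\ maxmul Q P = maxid n.

Definition upper_triangular n (A : 'M[R]_n) : Prop :=
  forall i j : 'I_n, (j < i)%N -> A i j = 0.

Definition simult_triangularizable n (A B : 'M[R]_n) : Prop :=
  exists P Q : 'M[R]_n, max_inverse P Q /\
    upper_triangular (maxmul (maxmul Q A) P) /\
    upper_triangular (maxmul (maxmul Q B) P).

End MaxAlgebra.

(* Main.v *)
Require Import Defs.
From mathcomp Require Import all_boot all_order all_algebra reals.
From mathcomp Require Import zify.
Import Order.TTheory GRing.Theory Num.Theory.
Local Open Scope ring_scope.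

Set Implicit Arguments. Unset Strict Implicit.
Section Aux.
Variable R : realType.
Variable n : nat.
Implicit Types (A B X Y : 'M[R]_n).

Lemma bigmax_ge (F : 'I_n -> R) i : F i <= \big[Num.max/0]_(k < n) F k.
Proof.
rewrite /index_enum. have : i \in index_enum 'I_n by rewrite mem_index_enum.
rewrite /index_enum; elim: (Finite.enum _) => [//|a s IH]; rewrite inE big_cons.
case/orP=> [/eqP->|/IH H]; rewrite le_max ?lexx //; by rewrite H orbT.
Qed.

Lemma bigmax_ge0 (F : 'I_n -> R) : 0 <= \big[Num.max/0]_(k < n) F k.
Proof.
elim/big_rec: _ => [|i y _ H]; first exact: lexx.
by rewrite le_max H orbT.
Qed.

Lemma bigmax_le (F : 'I_n -> R) c : (forall k, F k <= c) -> 0 <= c ->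
  \big[Num.max/0]_(k < n) F k <= c.
Proof.
move=> HF Hc; elim/big_rec: _ => [//|i y _ H].
by rewrite ge_max HF H.
Qed.

Lemma bigmax_eq0 (F : 'I_n -> R) : (forall k, F k <= 0) ->
  \big[Num.max/0]_(k < n) F k = 0.
Proof.
by move=> HF; apply/le_anti; rewrite bigmax_ge0 bigmax_le.
Qed.

Lemma bigmax_eq1 (F : 'I_n -> R) k0 : F k0 = 1 -> (forall k, F k <= 1) ->
  \big[Num.max/0]_(k < n) F k = 1.
Proof.
move=> H0 HF; apply/le_anti; rewrite bigmax_le ?ler01 //=.
by rewrite -{1}H0 bigmax_ge.
Qed.

Lemma maxmul_ge X Y i k j : X i k * Y k j <= maxmul X Y i j.
Proof. rewrite /maxmul mxE; exact: (bigmax_ge (fun k => X i k * Y k j)). Qed.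

Lemma walk_pow X k (v : nat -> 'I_n) :
  (forall t, (t < k)%N -> 0 < X (v t) (v t.+1)) -> 0 < maxpow X k (v 0%N) (v k).
Proof.
elim: k v => [|k IH] v Hv /=.
  by rewrite /maxid mxE eqxx ltr01.
apply: (lt_le_trans _ (maxmul_ge _ _ _ (v 1%N) _)).
apply: mulr_gt0; first exact: Hv.
apply: (IH (fun t => v t.+1)) => t Ht; exact: Hv.
Qed.

Lemma triple X Y Z a b c d : maxmul X (maxmul Y Z) = 0 ->
  0 < X a b -> 0 < Y b c -> 0 < Z c d -> False.
Proof.
move=> H h1 h2 h3.
have h4 : 0 < maxmul Y Z b d.
  apply: (lt_le_trans _ (maxmul_ge _ _ _ c _)); exact: mulr_gt0.
have := lt_le_trans (mulr_gt0 h1 h4) (maxmul_ge _ _ _ b _).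
by rewrite H mxE ltxx.
Qed.

Lemma chain X Y (v : nat -> 'I_n) m :
  (forall t, (t < m.+2)%N -> 0 < X (v t) (v t.+1) \/ 0 < Y (v t) (v t.+1)) ->
  (forall a b c d, 0 < X a b -> 0 < X b c -> 0 < Y c d -> False) ->
  (forall a b c d, 0 < Y a b -> 0 < X b c -> 0 < Y c d -> False) ->
  0 < X (v 1%N) (v 2%N) -> forall t, (t < m.+1)%N -> 0 < X (v t.+1) (v t.+2).
Proof.
move=> Hw H1 H2 H0; elim=> [//|t IH] Ht.
have IH' := IH (ltnW Ht).
have [h|h] := Hw t.+2 ltac:(lia); first by [].
have [h'|h'] := Hw t ltac:(lia).
  by case: (H1 _ _ _ _ h' IH' h).
by case: (H2 _ _ _ _ h' IH' h).
Qed.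

Definition edgeb A B (u v : 'I_n) : bool := (0 < A u v) || (0 < B u v).

Fixpoint D A B (m : nat) (v : 'I_n) : bool :=
  if m is m'.+1 then [exists w, edgeb A B v w && D A B m' w] else true.

Lemma D_walk A B m v : D A B m v -> exists f : nat -> 'I_n, f 0%N = v /\
  forall t, (t < m)%N -> edgeb A B (f t) (f t.+1).
Proof.
elim: m v => [|m IH] v /=.
  by move=> _; exists (fun _ => v).
case/existsP=> w /andP[e /IH [f [f0 Hf]]].
exists (fun t => if t is t'.+1 then f t' else v); split=> // [[|t]] Ht /=.
  by rewrite f0.
exact: Hf.
Qed.

Definition hgt A B N (v : 'I_n) : nat := (\sum_(0 <= m < N) D A B m v)%N.

Lemma hgt_lt A B N u w : D A B N.+1 u = false -> edgeb A B u w ->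
  (hgt A B N.+1 w < hgt A B N.+1 u)%N.
Proof.
move=> HN e.
have Hw : D A B N w = false.
  apply/negbTE/negP=> Dw; move: HN => /=.
  by move/negbT/existsPn/(_ w); rewrite e Dw.
rewrite /hgt big_nat_recr //= Hw addn0 big_nat_recl //= add1n ltnS.
apply: leq_sum => i _.
case Di: (D A B i w) => //=.
have -> : [exists w0, edgeb A B u w0 && D A B i w0] by apply/existsP; exists w; rewrite e Di.
by [].
Qed.

Definition key A B N (v : 'I_n) : nat := (hgt A B N v * n + v)%N.

Lemma key_inj A B N : injective (key A B N).
Proof.
move=> u w H; apply: val_inj => /=.
have := congr1 (fun x => x %% n)%N H; rewrite /key /= !modnMDl !modn_small //.
Qed.

Definition tset A B N (v : 'I_n) : {set 'I_n} :=
  [set u | (key A B N v < key A B N u)%N].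

Lemma tset_lt A B N v : (#|tset A B N v| < n)%N.
Proof.
have : tset A B N v \proper [set: 'I_n].
  rewrite properT; apply/negP => /eqP E.
  by have := in_setT v; rewrite -E inE ltnn.
by move/proper_card; rewrite cardsT card_ord.
Qed.

Definition tau A B N (v : 'I_n) : 'I_n := Ordinal (tset_lt A B N v).

Lemma tau_lt A B N a b : (key A B N a < key A B N b)%N ->
  (tau A B N b < tau A B N a)%N.
Proof.
move=> H; rewrite /tau /=; apply: proper_card; apply/properP; split.
  apply/subsetP => x; rewrite !inE => Hx; exact: ltn_trans H Hx.
by exists b; rewrite !inE ?ltnn.
Qed.

Lemma tau_inj A B N : injective (tau A B N).
Proof.
move=> u w E; apply: (@key_inj A B N).
case: (ltngtP (key A B N u) (key A B N w)) => // H.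
  by have := @tau_lt A B N _ _ H; rewrite E ltnn.
by have := @tau_lt A B N _ _ H; rewrite E ltnn.
Qed.

End Aux.
Unset Implicit Arguments.

Theorem corollary3p10 (R : realType) (n : nat) (A B : 'M[R]_n) :
  nonneg_mx A -> nonneg_mx B ->
  max_nilpotent A -> max_nilpotent B ->
  maxmul A (maxmul A B) = 0 -> maxmul A (maxmul B A) = 0 ->
  maxmul B (maxmul A B) = 0 -> maxmul B (maxmul B A) = 0 ->
  simult_triangularizable A B.
Proof.
move=> nA nB [kA HA] [kB HB] H1 H2 H3 H4.
set K := maxn kA kB.
have nowalk : forall v : nat -> 'I_n,
    (forall t, (t < K.+2)%N -> edgeb A B (v t) (v t.+1)) -> False.
  move=> v Hv.
  have Hv' : forall t, (t < K.+2)%N -> 0 < A (v t) (v t.+1) \/ 0 < B (v t) (v t.+1).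
    by move=> t /Hv /orP.
  have [e1|e1] := Hv' 1%N isT.
    have C := chain Hv' (fun a b c d => triple H1) (fun a b c d => triple H3) e1.
    have W : 0 < maxpow A kA (v 1%N) (v kA.+1).
      by apply: (walk_pow (v:=fun t => v t.+1)) => t Ht; apply: C; rewrite /K; lia.
    by rewrite HA mxE ltxx in W.
  have Hv'' : forall t, (t < K.+2)%N -> 0 < B (v t) (v t.+1) \/ 0 < A (v t) (v t.+1).
    by move=> t /Hv' [] ?; [right|left].
  have C := chain Hv'' (fun a b c d => triple H4) (fun a b c d => triple H2) e1.
  have W : 0 < maxpow B kB (v 1%N) (v kB.+1).
    by apply: (walk_pow (v:=fun t => v t.+1)) => t Ht; apply: C; rewrite /K; lia.
  by rewrite HB mxE ltxx in W.
have noD : forall u, D A B K.+2 u = false.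
  move=> u; apply/negbTE/negP => /D_walk [f [_ Hf]]; exact: nowalk Hf.
set t := tau A B K.+2.
have edge_t : forall k l, edgeb A B k l -> (t k < t l)%N.
  move=> k l e; apply: tau_lt; rewrite /key.
  have := hgt_lt (noD k) e.
  move=> Hh; have := ltn_ord l; have := ltn_ord k.
  have : ((hgt A B K.+2 l).+1 * n <= hgt A B K.+2 k * n)%N by rewrite leq_mul2r Hh orbT.
  lia.
pose P : 'M[R]_n := \matrix_(k, j) (if t k == j then 1 else 0).
pose Q : 'M[R]_n := \matrix_(i, k) (if t k == i then 1 else 0).
have tri : forall M : 'M[R]_n, nonneg_mx M ->
    (forall k l, 0 < M k l -> (t k < t l)%N) -> upper_triangular (maxmul (maxmul Q M) P).
  move=> M nM HM i j ji; rewrite /maxmul mxE; apply: bigmax_eq0 => l.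
  rewrite [P _ _]mxE; case: eqP => [tl|]; last by rewrite mulr0.
  rewrite mulr1 mxE; apply: bigmax_le => // k.
  rewrite mxE; case: eqP => [tk|]; last by rewrite mul0r.
  rewrite mul1r leNgt; apply/negP => /HM; rewrite tk tl => ij.
  by have := ltn_trans ij ji; rewrite ltnn.
have t_inj := @tau_inj R n A B K.+2.
exists P, Q; split; last split.
- split; first by move=> i j; rewrite mxE; case: eqP.
  split; first by move=> i j; rewrite mxE; case: eqP.
  split; apply/matrixP => i j; rewrite /maxmul /maxid !mxE.
    case: eqP => [<-|ij].
      apply: (bigmax_eq1 (k0 := t i)); first by rewrite !mxE eqxx mulr1.
      by move=> k; rewrite !mxE; repeat (case: ifP => _); rewrite ?mulr1 ?mulr0 ?ler01 ?lexx.
    apply: bigmax_eq0 => k; rewrite !mxE.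
    case: (t i =P k) => [e1|_]; case: (t j =P k) => [e2|_]; rewrite ?mulr1 ?mulr0 ?mul0r //.
    by case: ij; apply: t_inj; exact: (etrans e1 (esym e2)).
  case: eqP => [<-|ij].
    apply: (bigmax_eq1 (k0 := invF t_inj i)); first by rewrite !mxE f_invF eqxx mulr1.
    by move=> k; rewrite !mxE; repeat (case: ifP => _); rewrite ?mulr1 ?mulr0 ?ler01 ?lexx.
  apply: bigmax_eq0 => k; rewrite !mxE.
  case: (t k =P i) => [e1|_]; case: (t k =P j) => [e2|_]; rewrite ?mulr1 ?mulr0 ?mul0r //.
  by case: ij; rewrite -e1 -e2.
- apply: tri => // k l h; apply: edge_t; by rewrite /edgeb h.
- apply: tri => // k l h; apply: edge_t; by rewrite /edgeb h orbT.
Qed.
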